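(* Let $\alpha\in(0,1)$, $\gamma>0$, $a>0$, $b\in\mathbb R\setminus\{0\}$, and assume $\eta=0$. Then the operator $-\mathcal A$ is not invertible; consequently $0\in\sigma(\mathcal A)$.
   Context: Let $\mu(\xi)=|\xi|^{\frac{2\alpha-1}{2}}$ and $\kappa(\alpha)=\frac{\sin(\alpha\pi)}{\pi}$. Let $H^1_L(0,1)=\{u\in H^1(0,1):u(0)=0\}$. $\mathcal H=H^1_L(0,1)\times L^2(0,1)\times H^1_0(0,1)\times L^2(0,1)\times L^2(\mathbb R)$ with inner product $\langle(u,v,y,z,\omega),(\tilde u,\tilde v,\tilde y,\tilde z,\tilde\omega)\rangle_{\mathcal H}=\int_0^1(v\bar{\tilde v}+u_x\bar{\tilde u}_x+z\bar{\tilde z}+a y_x\bar{\tilde y}_x)dx+\gamma\kappa(\alpha)\int_{\mathbb R}\omega\bar{\tilde\omega}\,d\xi$. $D(\mathcal A)$ is the set of $(u,v,y,z,\omega)\in\mathcal H$ with $u\in H^2(0,1)\cap H^1_L(0,1)$, $y\in H^2(0,1)\cap H^1_0(0,1)$, $v\in H^1_L(0,1)$, $z\in H^1_0(0,1)$, $-(\xi^2+\eta)\omega+v(1)\mu(\xi)\in L^2(\mathbb R)$, $|\xi|\omega\in L^2(\mathbb R)$, $u_x(1)+\gamma\kappa(\alpha)\int_{\mathbb R}\mu(\xi)\omega(\xi)d\xi=0$, and $\mathcal A(u,v,y,z,\omega)=(v,\,u_{xx}-bz,\,z,\,ay_{xx}+bv,\,-(\xi^2+\eta)\omega+v(1)\mu(\xi))$.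 *)

(* Defs.v *)
From HB Require Import structures.
From mathcomp Require Import all_boot all_order all_algebra.
From mathcomp Require Import all_classical all_reals all_analysis.
From mathcomp Require Import complex.
Set Implicit Arguments. Unset Strict Implicit. Unset Printing Implicit Defensive.
Import Order.TTheory GRing.Theory Num.Theory.
Import numFieldNormedType.Exports.
Local Open Scope classical_set_scope.
Local Open Scope ring_scope.
Local Open Scope complex_scope.

Section Defs.
Variable R : realType.
Notation C := (R[i]).
Notation leb := (@lebesgue_measure R).

Definition cre (z : C) : R := complex.Re z.
Definition cim (z : C) : R := complex.Im z.

Definition cmeas (D : set R) (f : R -> C) :=
  measurable_fun D (fun x => cre (f x)) /\ measurable_fun D (fun x => cim (f x)).

Definition L2on (D : set R) (f : R -> C) :=
  cmeas D f /\
  leb.-integrable D (fun x => ((cre (f x)) ^+ 2 + (cim (f x)) ^+ 2)%:E).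

Definition L1on (D : set R) (f : R -> C) :=
  leb.-integrable D (fun x => (cre (f x))%:E) /\
  leb.-integrable D (fun x => (cim (f x))%:E).

Definition cint (D : set R) (f : R -> C) : C :=
  complex.Complex (\int[leb]_(x in D) cre (f x))%R (\int[leb]_(x in D) cim (f x))%R.

Definition aeq (D : set R) (f g : R -> C) :=
  {ae leb, forall x, D x -> f x = g x}.

(** [H1rep u ux]: u (its continuous representative on [0,1]) belongs to
    H^1(0,1) with weak derivative ux, i.e. ux is in L^2(0,1) and
    u x = u 0 + int_0^x ux for all x in [0,1]. *)
Definition H1rep (u ux : R -> C) :=
  L2on `[0, 1] ux /\
  forall x, 0 <= x <= 1 -> u x = u 0 + cint `[0, x] ux.

Definition kappa (alpha : R) : R := sin (alpha * pi) / pi.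
Definition mu (alpha : R) (xi : R) : R := `|xi| `^ ((2 * alpha - 1) / 2).

(** A state (u, v, y, z, omega); components are representatives of
    functions on (0,1) (first four) and on the real line (omega). *)
Record state := State { st_u : R -> C; st_v : R -> C; st_y : R -> C;
                        st_z : R -> C; st_w : R -> C }.

Definition inH (U : state) :=
  [/\ (exists ux, H1rep (st_u U) ux) /\ st_u U 0 = 0,
      L2on `[0, 1] (st_v U),
      (exists yx, H1rep (st_y U) yx) /\ st_y U 0 = 0 /\ st_y U 1 = 0,
      L2on `[0, 1] (st_z U) &
      L2on setT (st_w U)].

Definition eqH (U V : state) :=
  [/\ aeq `[0, 1] (st_u U) (st_u V), aeq `[0, 1] (st_v U) (st_v V),
      aeq `[0, 1] (st_y U) (st_y V), aeq `[0, 1] (st_z U) (st_z V) &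
      aeq setT (st_w U) (st_w V)].

Definition negH (U : state) : state :=
  State (fun x => - st_u U x) (fun x => - st_v U x) (fun x => - st_y U x)
        (fun x => - st_z U x) (fun x => - st_w U x).

Definition Aw (alpha eta : R) (U : state) : R -> C :=
  fun xi => - ((xi ^+ 2 + eta)%:C * st_w U xi) + st_v U 1 * (mu alpha xi)%:C.

Definition DAwit (alpha gamma eta : R) (U : state) (ux uxx yx yxx : R -> C) :=
  [/\ H1rep (st_u U) ux /\ H1rep ux uxx /\ st_u U 0 = 0,
      H1rep (st_y U) yx /\ H1rep yx yxx /\ st_y U 0 = 0 /\ st_y U 1 = 0,
      (exists vx, H1rep (st_v U) vx) /\ st_v U 0 = 0,
      (exists zx, H1rep (st_z U) zx) /\ st_z U 0 = 0 /\ st_z U 1 = 0 &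
      [/\ L2on setT (st_w U),
          L2on setT (Aw alpha eta U),
          L2on setT (fun xi => (`|xi|)%:C * st_w U xi),
          L1on setT (fun xi => (mu alpha xi)%:C * st_w U xi) &
          ux 1 + (gamma * kappa alpha)%:C *
                 cint setT (fun xi => (mu alpha xi)%:C * st_w U xi) = 0]].

Definition inDA (alpha gamma eta : R) (U : state) :=
  exists ux uxx yx yxx, DAwit alpha gamma eta U ux uxx yx yxx.

Definition Aeq (alpha gamma a b eta : R) (U F : state) :=
  exists ux uxx yx yxx, DAwit alpha gamma eta U ux uxx yx yxx /\
  [/\ aeq `[0, 1] (st_u F) (st_v U),
      aeq `[0, 1] (st_v F) (fun x => uxx x - b%:C * st_z U x),
      aeq `[0, 1] (st_y F) (st_z U),
      aeq `[0, 1] (st_z F) (fun x => a%:C * yxx x + b%:C * st_v U x) &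
      aeq setT (st_w F) (Aw alpha eta U)].

Definition negA_invertible (alpha gamma a b eta : R) :=
  (forall F, inH F -> exists U, inDA alpha gamma eta U /\
                               Aeq alpha gamma a b eta U (negH F)) /\
  (forall U U' F, Aeq alpha gamma a b eta U F ->
                  Aeq alpha gamma a b eta U' F -> eqH U U').

End Defs.

(* Main.v *)
Require Import Defs.
From HB Require Import structures.
From mathcomp Require Import all_boot all_order all_algebra.
From mathcomp Require Import all_classical all_reals all_analysis.
From mathcomp Require Import complex measurable_realfun ring lra.
Import Order.TTheory GRing.Theory Num.Theory.
Import numFieldNormedType.Exports.
Local Open Scope classical_set_scope.
Local Open Scope ring_scope.
Local Open Scope complex_scope.

Section S.
Variable R : realType.
Notation C := (R[i]).

Lemma L2on0 (D : set R) : measurable D -> L2on D (fun=> (0 : C)).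
Proof.
move=> mD; split; first by split; rewrite /cre /cim /=; exact: measurable_cst.
apply: (eq_integrable _ (cst 0%E)) => //; last exact: integrable0.
by move=> x _ /=; rewrite /cre /cim /= expr0n /= addr0.
Qed.

Lemma H1rep0 : H1rep (fun=> (0:C)) (fun=> 0).
Proof.
split; first exact: L2on0.
move=> x _; rewrite add0r /cint /cre /cim /=.
by rewrite !Rintegral_cst //= !mul0r.
Qed.

Definition f5 : R -> C := fun x => (\1_(`[0, 1]) x : R)%:C.

Definition FF := State (fun=> (0:C)) (fun=> 0) (fun=> 0) (fun=> 0) f5.

Lemma inH_FF : inH FF.
Proof.
split => /=.
- by split => //; exists (fun=> 0); exact: H1rep0.
- exact: L2on0.
- by split => //; exists (fun=> 0); exact: H1rep0.
- exact: L2on0.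
split.
  split; rewrite /cre /cim /f5 /=; last exact: measurable_cst.
  exact: measurable_indic.
have := integrable_indic_itv (0:R) 1 true false.
apply: eq_integrable => //.

move=> x _ /=; rewrite /cre /cim /f5 /= expr0n /= addr0.
by rewrite /indic; case: (_ \in _); rewrite /= ?expr1n ?expr0n.
Qed.

Notation leb := (@lebesgue_measure R).

Lemma blowup (g : R -> \bar R) (S : nat -> set R) (K : R) :
  0 < K -> (forall n, measurable (S n)) ->
  (forall n, leb (S n) = ((n.+1%:R)^-1)%:E) ->
  (forall n, {ae leb, forall x, S n x -> ((K * (n.+1%:R) ^+ 2)%:E <= g x)%E}) ->
  (forall x, (0 <= g x)%E) -> ~ leb.-integrable setT g.
Proof.
move=> K0 mS lS ae g0 /integrableP [mg fin].
have eqM : (\int[leb]_(x in setT) `|g x| = \int[leb]_(x in setT) g x)%E.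
  by apply: eq_integral => x _; rewrite gee0_abs.
rewrite eqM in fin.
have M0 : (0 <= \int[leb]_(x in setT) g x)%E by apply: integral_ge0.
have Mfin : ((\int[leb]_(x in setT) g x) \is a fin_num)%E by rewrite ge0_fin_numE.
set M := fine (\int[leb]_(x in setT) g x)%E.
have bound n : K * n.+1%:R <= M.
  rewrite -lee_fin /M fineK //.
  have h1 : (\int[leb]_(x in S n) g x <= \int[leb]_(x in setT) g x)%E.
    exact: (ge0_subset_integral leb (mS n) measurableT mg (fun x _ => g0 x) (@subsetT _ _)).
  apply: le_trans h1.
  have E : (\int[leb]_(x in S n) ((K * n.+1%:R ^+ 2)%:E : \bar R) = (K * n.+1%:R)%:E)%E.
    rewrite integral_cst; last exact: mS.
    rewrite (_ : _ (S n) = ((n.+1%:R)^-1)%:E); last exact: lS.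
    rewrite -EFinM; congr EFin.

    by rewrite expr2 mulrA mulfK // pnatr_eq0.
  have h2 : ((K * n.+1%:R)%:E <= \int[leb]_(x in S n) ((K * n.+1%:R ^+ 2)%:E : \bar R))%E.
    by rewrite E.
  apply: le_trans h2 _.
  apply: ae_ge0_le_integral.
  - exact: mS.
  - by move=> x _; rewrite lee_fin mulr_ge0 // ltW.
  - exact: measurable_cst.
  - by move=> x _; exact: g0.
  - exact: measurable_funS mg.
  - exact: ae.
have M0' : 0 <= M / K by rewrite divr_ge0 // ?fine_ge0 // ltW.
have := bound (Num.truncn (M / K)).
rewrite -ler_pdivlMl // [in X in X -> _]mulrC.
by move=> h; have := lt_le_trans (truncnS_gt (K^-1 * M)) h; rewrite ltxx.
Qed.


Lemma ptw (x m f : R) (w c : C) :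
  - (f%:C) = - ((x ^+ 2 + 0)%:C * w) + c * m%:C ->
  x^+2 * complex.Re w = f + complex.Re c * m /\ x^+2 * complex.Im w = complex.Im c * m.
Proof.
case: w => wr wi; case: c => cr ci; simpc => -[e1 e2] /=; split; lra.
Qed.

Lemma Kpos (c : C) : c != 0 -> 0 < complex.Re c ^+ 2 + complex.Im c ^+ 2.
Proof.
case: c => cr ci /= h.
rewrite lt_neqAle addr_ge0 ?sqr_ge0 // andbT eq_sym.
apply: contra h; rewrite paddr_eq0 ?sqr_ge0 // !sqrf_eq0 => /andP[/eqP-> /eqP->].
by [].
Qed.

Lemma arith (x r N W K : R) : 0 < x^+2 -> x^+2 <= r^+2 -> r * N = 1 -> 0 <= W ->
  K * x^+2 <= x^+2 * x^+2 * W -> K * N^+2 <= W.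
Proof.
move=> x0 xr rN W0 h.
have h1 : K <= x^+2 * W.
  nra.
have h2 : x^+2 * N^+2 <= 1.
  have : x^+2 * N^+2 <= r^+2 * N^+2 by rewrite ler_wpM2r // sqr_ge0.
  by move=> hh; apply: (le_trans hh); rewrite -exprMn rN expr1n.
have h3 : 0 <= N^+2 by rewrite sqr_ge0.
nra.
Qed.
End S.

Theorem lemma2p6 (R : realType) (alpha gamma a b : R) :
  0 < alpha < 1 -> 0 < gamma -> 0 < a -> b != 0 ->
  ~ negA_invertible alpha gamma a b 0.
Proof.
move=> /andP[a0 a1] g0 ha hb [ex _].
have [U [_ [ux [uxx [yx [yxx [HD HA]]]]]]] := ex _ (inH_FF R).
case: HD => _ _ _ _ [Lw _ _ _ _].
case: HA => _ _ _ _ Hw.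
move: Lw => [_ Iw].

have g0' : forall x, (0 <= ((cre (st_w U x)) ^+ 2 + (cim (st_w U x)) ^+ 2)%:E)%E.
  by move=> x; rewrite lee_fin addr_ge0 // sqr_ge0.
have [c0|cn0] := eqVneq (st_v U 1) 0.
- apply: (@blowup R _ (fun n => [set` `]0, (n.+1%:R)^-1]]) 1 _ _ _ _ g0' Iw) => //.
  + move=> n; rewrite lebesgue_measure_itv /= lte_fin invr_gt0 ltr0n /=.
    by rewrite oppr0 adde0.
  + move=> n; case: Hw => N [mN N0 HN]; exists N; split => // x /= nP.
    apply: HN => /= /(_ I) Hx; apply: nP.
    rewrite in_itv /= => /andP[x0 xr].
    have x01 : x \in `[0, 1] .
      rewrite in_itv /= (ltW x0) /=; apply: (le_trans xr).
      by rewrite invf_le1 // ?ler1n // ltr0n.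
    move: Hx; rewrite /Aw /= /f5 indicE mem_set // => /ptw [].
    rewrite c0 /= mul0r addr0 => e1 e2.
    rewrite /cre /cim lee_fin.
    apply: (@arith R x ((n.+1%:R)^-1)).
    * by rewrite exprn_gt0.
    * by rewrite ler_sqr // ?nnegrE ?ltW // invr_gt0 ltr0n.
    * by rewrite mulVf // pnatr_eq0.
    * by rewrite addr_ge0 // sqr_ge0.
    * have -> : x^+2 * x^+2 * ((complex.Re (st_w U x))^+2 + (complex.Im (st_w U x))^+2) = 1.
        nra.
      rewrite mul1r.
      have : x <= 1 by move: x01; rewrite in_itv /= => /andP[].
      nra.
- have K0 := @Kpos R _ cn0.
  apply: (@blowup R _ (fun n => [set` `[-(n.+1%:R)^-1, 0[]) _ K0 _ _ _ g0' Iw) => //.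
  + move=> n; rewrite lebesgue_measure_itv /= lte_fin oppr_lt0 invr_gt0 ltr0n /=.
    by rewrite add0e opprK.
  + move=> n; case: Hw => N [mN N0 HN]; exists N; split => // x /= nP.
    apply: HN => /= /(_ I) Hx; apply: nP.
    rewrite in_itv /= => /andP[xr x0].
    have xn01 : ~ (`[0, 1]%classic x).
      by rewrite /= in_itv /= leNgt x0.
    move: Hx; rewrite /Aw /= /f5 indicE memNset // => /ptw [].
    rewrite /= add0r => e1 e2.
    have ax1 : `|x| <= 1.
      rewrite ltr0_norm //; apply: le_trans (_ : (n.+1%:R)^-1 <= 1).
        by rewrite lerNl.
      by rewrite invf_le1 // ?ler1n // ltr0n.
    have hm : `|x| <= mu alpha x.
      rewrite /mu -{1}(powRr1 (normr_ge0 x)).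
      apply: ger_powR; first by rewrite normr_gt0 ?lt_eqF // ax1.
      lra.
    have hm2 : x^+2 <= (mu alpha x)^+2.
      by rewrite -real_normK ?num_real // ler_sqr // ?nnegrE // (le_trans _ hm).
    rewrite /cre /cim lee_fin.
    apply: (@arith R x ((n.+1%:R)^-1)).
    * by rewrite exprn_even_gt0 //= (lt_eqF x0).
    * rewrite -sqrrN ler_sqr // ?nnegrE ?invr_ge0 ?ler0n //; last by rewrite oppr_ge0 ltW.
      by rewrite lerNl.
    * by rewrite mulVf // pnatr_eq0.
    * by rewrite addr_ge0 // sqr_ge0.
    * set wr := complex.Re (st_w U x) in e1 *; set wi := complex.Im (st_w U x) in e2 *.
      have -> : x^+2 * x^+2 * (wr^+2 + wi^+2) = (x^+2 * wr)^+2 + (x^+2 * wi)^+2 by ring.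
      rewrite e1 e2 !exprMn -mulrDl.
      apply: ler_wpM2l; last exact: hm2.
      by rewrite addr_ge0 // sqr_ge0.
Qed.
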